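(* Let $\mathcal{A}\subset\mathbb{P}^2\mathbb{C}$ be a line arrangement with $|\mathcal{A}|=12$ all of whose intersection points have multiplicity at most $5$. Suppose the system $\mathbf{S}$ over $\mathbb{F}_2$ admits a non-constant solution. Then each line of $\mathcal{A}$ contains exactly $3$ quadruple points.
   Context: For a prime $p$, the system $\mathbf{S}$ over $\mathbb{F}_p$ is the linear system in unknowns $(\eta_H)_{H\in\mathcal{A}}$, one unknown for each line, with one set of conditions for each intersection point $X$ of $\mathcal{A}$. Let $m_X$ be the number of lines through $X$. If $p\mid m_X$, the condition is $\sum_{H\ni X}\eta_H=0$. If $p\nmid m_X$, the condition is $\eta_H=\eta_K$ for all lines $H,K$ through $X$. A solution is non-constant if not all $\eta_H$ are equal. A quadruple point is a point lying on exactly $4$ lines of $\mathcal{A}$. *)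

(* Defs.v *)
(* Lines / points of P^2(C) via homogeneous coordinates in algC^3. *)
From HB Require Import structures.
From mathcomp Require Import all_boot all_order all_algebra all_field.
Set Implicit Arguments. Unset Strict Implicit. Unset Printing Implicit Defensive.
Import GRing.Theory Num.Theory.
Local Open Scope ring_scope.

Definition incident (l v : 'rV[algC]_3) : bool := \sum_(k < 3) l 0 k * v 0 k == 0.

Definition line_arrangement (n : nat) (L : 'I_n -> 'rV[algC]_3) : Prop :=
  (forall i, L i != 0) /\ (forall i j (c : algC), L i = c *: L j -> i = j).

Definition lines_through (n : nat) (L : 'I_n -> 'rV[algC]_3) (v : 'rV[algC]_3) : {set 'I_n} :=
  [set i | incident (L i) v].
Definition mult (n : nat) (L : 'I_n -> 'rV[algC]_3) (v : 'rV[algC]_3) : nat :=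
  #|lines_through L v|.

Definition intersection_point (n : nat) (L : 'I_n -> 'rV[algC]_3) (v : 'rV[algC]_3) : bool :=
  (v != 0) && (2 <= mult L v)%N.

(* canonical representative of a projective point: first nonzero coordinate is 1 *)
Definition normalized (v : 'rV[algC]_3) : bool :=
  [exists k : 'I_3, (v 0 k == 1) && [forall j : 'I_3, (j < k)%N ==> (v 0 j == 0)]].

Definition solves_S (p n : nat) (L : 'I_n -> 'rV[algC]_3) (eta : 'I_n -> 'F_p) : Prop :=
  forall v, intersection_point L v ->
    if (p %| mult L v)%N then \sum_(i in lines_through L v) eta i = 0
    else forall h k, h \in lines_through L v -> k \in lines_through L v -> eta h = eta k.

Definition nonconstant (p n : nat) (eta : 'I_n -> 'F_p) : Prop :=
  exists h k, eta h <> eta k.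

(* Main.v *)
Require Import Defs.
From HB Require Import structures.
From mathcomp Require Import all_boot all_order all_algebra all_field.
From mathcomp Require Import ring zify.
Set Implicit Arguments. Unset Strict Implicit. Unset Printing Implicit Defensive.
Import GRing.Theory Num.Theory.
Local Open Scope ring_scope.

Definition o0 : 'I_3 := @Ordinal 3 0 isT.
Definition o1 : 'I_3 := @Ordinal 3 1 isT.
Definition o2 : 'I_3 := @Ordinal 3 2 isT.

Lemma ord3P (P : 'I_3 -> Prop) : P o0 -> P o1 -> P o2 -> forall k, P k.
Proof.
move=> h0 h1 h2 [[|[|[|]]] hk] //.
- by rewrite (_ : Ordinal hk = o0) //; apply: val_inj.
- by rewrite (_ : Ordinal hk = o1) //; apply: val_inj.
- by rewrite (_ : Ordinal hk = o2) //; apply: val_inj.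
Qed.

Lemma rowE3 (v w : 'rV[algC]_3) :
  v 0 o0 = w 0 o0 -> v 0 o1 = w 0 o1 -> v 0 o2 = w 0 o2 -> v = w.
Proof. by move=> *; apply/rowP; apply: ord3P. Qed.

Lemma incidentE (l v : 'rV[algC]_3) :
  incident l v = (l 0 o0 * v 0 o0 + l 0 o1 * v 0 o1 + l 0 o2 * v 0 o2 == 0).
Proof.
rewrite /incident !big_ord_recl big_ord0 addr0 addrA.
have -> : (lift ord0 ord0 : 'I_3) = o1 by apply: val_inj.
have -> : (lift ord0 (lift ord0 ord0) : 'I_3) = o2 by apply: val_inj.
by have -> : (ord0 : 'I_3) = o0 by apply: val_inj.
Qed.

Lemma normalizedE (v : 'rV[algC]_3) :
  normalized v <->
  [\/ v 0 o0 = 1, v 0 o0 = 0 /\ v 0 o1 = 1 | [/\ v 0 o0 = 0, v 0 o1 = 0 & v 0 o2 = 1]].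
Proof.
split.
- case/existsP=> k /andP[/eqP vk /forallP H]; move: vk H; elim/ord3P: k => vk H.
  + by constructor 1.
  + by constructor 2; split=> //; apply/eqP; exact: (implyP (H o0)).
  + by constructor 3; split=> //; apply/eqP; [exact: (implyP (H o0))|exact: (implyP (H o1))].
- case=> [h|[h0 h1]|[h0 h1 h2]]; apply/existsP.
  + by exists o0; rewrite h eqxx; apply/forallP.
  + exists o1; rewrite h1 eqxx /=; apply/forallP; elim/ord3P => //=; by rewrite h0.
  + exists o2; rewrite h2 eqxx /=; apply/forallP; elim/ord3P => //=; by rewrite ?h0 ?h1.
Qed.

Lemma normalized_neq0 v : normalized v -> v != 0.
Proof.
move/normalizedE=> H; apply/eqP=> v0; move: H; rewrite v0 !mxE.
by case=> [e|[_ e]|[_ _ e]]; move: (oner_neq0 algC); rewrite -e eqxx.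
Qed.

Lemma normalized_uniq v w c : normalized v -> normalized w -> v = c *: w -> v = w.
Proof.
move=> nv nw E.
have cn0 : c != 0 by apply/eqP => c0; move: (normalized_neq0 nv); rewrite E c0 scale0r eqxx.
move: nv nw => /normalizedE Hv /normalizedE Hw.
have e k : v 0 k = c * w 0 k by rewrite E mxE.
suff c1 : c = 1 by rewrite E c1 scale1r.
have n10 : (1 : algC) <> 0 by move/eqP; rewrite oner_eq0.
case: Hv Hw => [a|[a b]|[a b d]] [a'|[a' b']|[a' b' d']];
  move: (e o0) (e o1) (e o2); rewrite ?a ?b ?d ?a' ?b' ?d' ?mulr0 ?mulr1 => e0 e1 e2;
  first [ by [] | by move: cn0; rewrite -e0 eqxx | by move: cn0; rewrite -e1 eqxx].
Qed.

Definition mk3 (a b c : algC) : 'rV[algC]_3 :=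
  \row_(k < 3) (if k == o0 then a else if k == o1 then b else c).

Lemma mk3E a b c : [/\ mk3 a b c 0 o0 = a, mk3 a b c 0 o1 = b & mk3 a b c 0 o2 = c].
Proof. by rewrite !mxE. Qed.

Definition cross (l m : 'rV[algC]_3) : 'rV[algC]_3 :=
  mk3 (l 0 o1 * m 0 o2 - l 0 o2 * m 0 o1)
      (l 0 o2 * m 0 o0 - l 0 o0 * m 0 o2)
      (l 0 o0 * m 0 o1 - l 0 o1 * m 0 o0).

Lemma row_neq0 (c : 'rV[algC]_3) : c != 0 ->
  [\/ c 0 o0 != 0, c 0 o1 != 0 | c 0 o2 != 0].
Proof.
move=> cn0; case: (eqVneq (c 0 o0) 0) => [h0|]; last by constructor 1.
case: (eqVneq (c 0 o1) 0) => [h1|]; last by constructor 2.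
case: (eqVneq (c 0 o2) 0) => [h2|]; last by constructor 3.
by move: cn0; rewrite (@rowE3 c 0) ?eqxx // mxE.
Qed.

Ltac solve3 h01 h12 h20 := first [ by [] | by rewrite h01 mulrC | by rewrite -h01 mulrC
  | by rewrite h12 mulrC | by rewrite -h12 mulrC | by rewrite h20 mulrC | by rewrite -h20 mulrC
  | by rewrite mulrC h01 | by rewrite mulrC -h01 | by rewrite mulrC h12 | by rewrite mulrC -h12
  | by rewrite mulrC h20 | by rewrite mulrC -h20 ].

Lemma par3 (v c : 'rV[algC]_3) :
  v 0 o1 * c 0 o2 = v 0 o2 * c 0 o1 ->
  v 0 o2 * c 0 o0 = v 0 o0 * c 0 o2 ->
  v 0 o0 * c 0 o1 = v 0 o1 * c 0 o0 ->
  c != 0 -> exists a, v = a *: c.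
Proof.
move=> h12 h20 h01 /row_neq0 [] ck.
- exists (v 0 o0 / c 0 o0); apply: rowE3; rewrite mxE; apply: (mulIf ck);
  rewrite mulrAC divfK //; solve3 h01 h12 h20.
- exists (v 0 o1 / c 0 o1); apply: rowE3; rewrite mxE; apply: (mulIf ck);
  rewrite mulrAC divfK //; solve3 h01 h12 h20.
- exists (v 0 o2 / c 0 o2); apply: rowE3; rewrite mxE; apply: (mulIf ck);
  rewrite mulrAC divfK //; solve3 h01 h12 h20.
Qed.

Lemma incident_cross l m : incident l (cross l m) /\ incident m (cross l m).
Proof. by rewrite !incidentE; rewrite /cross /mk3 ?mxE /=; split; apply/eqP; ring. Qed.

Lemma cross_neq0 l m : m != 0 -> (forall a, l <> a *: m) -> cross l m != 0.
Proof.
move=> mn0 H; apply/eqP => c0.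
have e k : cross l m 0 k = 0 by rewrite c0 mxE.
move: (e o0) (e o1) (e o2); rewrite /cross /mk3 ?mxE /= => e0 e1 e2.
have [a la] : exists a, l = a *: m.
  by apply: par3 => //; apply/eqP; rewrite -subr_eq0 ?e0 ?e1 ?e2.
exact: H la.
Qed.

Lemma on_cross l m v : incident l v -> incident m v -> cross l m != 0 ->
  exists a, v = a *: cross l m.
Proof.
rewrite !incidentE => /eqP hl /eqP hm cn0; apply: par3 => //;
  rewrite /cross /mk3 ?mxE /=; apply/eqP; rewrite -subr_eq0.
- have -> : (v 0 o1 * (l 0 o0 * m 0 o1 - l 0 o1 * m 0 o0) -
   v 0 o2 * (l 0 o2 * m 0 o0 - l 0 o0 * m 0 o2)) =
   l 0 o0 * (m 0 o0 * v 0 o0 + m 0 o1 * v 0 o1 + m 0 o2 * v 0 o2)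
   - m 0 o0 * (l 0 o0 * v 0 o0 + l 0 o1 * v 0 o1 + l 0 o2 * v 0 o2) by ring.
  by rewrite hl hm !mulr0 subrr.
- have -> : (v 0 o2 * (l 0 o1 * m 0 o2 - l 0 o2 * m 0 o1) -
   v 0 o0 * (l 0 o0 * m 0 o1 - l 0 o1 * m 0 o0)) =
   l 0 o1 * (m 0 o0 * v 0 o0 + m 0 o1 * v 0 o1 + m 0 o2 * v 0 o2)
   - m 0 o1 * (l 0 o0 * v 0 o0 + l 0 o1 * v 0 o1 + l 0 o2 * v 0 o2) by ring.
  by rewrite hl hm !mulr0 subrr.
- have -> : (v 0 o0 * (l 0 o2 * m 0 o0 - l 0 o0 * m 0 o2) -
   v 0 o1 * (l 0 o1 * m 0 o2 - l 0 o2 * m 0 o1)) =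
   l 0 o2 * (m 0 o0 * v 0 o0 + m 0 o1 * v 0 o1 + m 0 o2 * v 0 o2)
   - m 0 o2 * (l 0 o0 * v 0 o0 + l 0 o1 * v 0 o1 + l 0 o2 * v 0 o2) by ring.
  by rewrite hl hm !mulr0 subrr.
Qed.

Lemma incidentZ l v a : a != 0 -> incident l (a *: v) = incident l v.
Proof.
move=> an0; rewrite !incidentE !mxE.
have -> : l 0 o0 * (a * v 0 o0) + l 0 o1 * (a * v 0 o1) + l 0 o2 * (a * v 0 o2)
  = a * (l 0 o0 * v 0 o0 + l 0 o1 * v 0 o1 + l 0 o2 * v 0 o2) by ring.
by rewrite mulf_eq0 (negPf an0).
Qed.

Lemma normalize v : v != 0 -> exists2 a, a != 0 & normalized (a *: v).
Proof.
move=> /row_neq0 H.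
case: (eqVneq (v 0 o0) 0) => [h0|h0].
  case: (eqVneq (v 0 o1) 0) => [h1|h1].
    have h2 : v 0 o2 != 0 by case: H; rewrite ?h0 ?h1 ?eqxx.
    exists (v 0 o2)^-1; first by rewrite invr_eq0.
    by apply/normalizedE; constructor 3; rewrite !mxE ?h0 ?h1 ?mulr0 ?mulVf.
  exists (v 0 o1)^-1; first by rewrite invr_eq0.
  by apply/normalizedE; constructor 2; rewrite !mxE ?h0 ?mulr0 ?mulVf.
exists (v 0 o0)^-1; first by rewrite invr_eq0.
by apply/normalizedE; constructor 1; rewrite !mxE ?mulVf.
Qed.
Lemma card_cond (I : finType) (P Q : pred I) :
  #|[set x | P x && Q x]| = (\sum_(x | P x) (Q x : nat))%N.
Proof. by rewrite -sum1dep_card big_mkcondr; apply: eq_bigr => x _; case: (Q x). Qed.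

Section Geo.
Variable L : 'I_12 -> 'rV[algC]_3.
Hypothesis hL : line_arrangement L.

Lemma meet i j : i != j -> exists v, normalized v && incident (L i) v && incident (L j) v.
Proof.
move=> ij; case: hL => nz di.
have cn0 : cross (L i) (L j) != 0.
  by apply: cross_neq0 => // a /di e; move: ij; rewrite e eqxx.
have [a an0 na] := normalize cn0.
exists (a *: cross (L i) (L j)); rewrite na !incidentZ //.
by case: (incident_cross (L i) (L j)) => -> ->.
Qed.

Lemma uniq_pt i j v w : i != j -> normalized v -> normalized w ->
  incident (L i) v -> incident (L j) v -> incident (L i) w -> incident (L j) w -> v = w.
Proof.
move=> ij nv nw hv1 hv2 hw1 hw2; case: hL => nz di.
have cn0 : cross (L i) (L j) != 0.
  by apply: cross_neq0 => // a /di e; move: ij; rewrite e eqxx.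
have [a va] := on_cross hv1 hv2 cn0.
have [b wb] := on_cross hw1 hw2 cn0.
have bn0 : b != 0 by apply/eqP => b0; move: (normalized_neq0 nw); rewrite wb b0 scale0r eqxx.
apply: (@normalized_uniq _ _ (a / b)) => //.
by rewrite va wb scalerA divfK.
Qed.

Lemma Pex i j : exists v, (i != j) ==> [&& normalized v, incident (L i) v & incident (L j) v].
Proof.
case: (eqVneq i j) => [->|ij]; first by exists 0; apply/implyP; move/eqP.
by have [v /andP[/andP[a b] c]] := meet ij; exists v; rewrite a b c implybT.
Qed.

Definition P i j := xchoose (Pex i j).

Lemma PP i j : i != j -> [/\ normalized (P i j), incident (L i) (P i j) & incident (L j) (P i j)].
Proof. by move=> ij; move: (xchooseP (Pex i j)) => /implyP /(_ ij) /and3P[]. Qed.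

Lemma Puniq i j v : i != j -> normalized v -> incident (L i) v -> incident (L j) v -> v = P i j.
Proof. by move=> ij nv a b; case: (PP ij) => c d e; apply: (uniq_pt ij). Qed.

Lemma PC i j : i != j -> P i j = P j i.
Proof. by move=> ij; case: (PP ij) => a b c; apply: Puniq => //; rewrite eq_sym. Qed.

Lemma swapT h g k : h != g -> h != k -> incident (L k) (P h g) = incident (L g) (P h k).
Proof.
move=> hg hk; case: (PP hg) => a b c; case: (PP hk) => a' b' c'.
apply/idP/idP => H.
- by rewrite -(Puniq hk a b H).
- by rewrite -(Puniq hg a' b' H).
Qed.

Definition inA (A : {set 'I_12}) v := [set k | (k \in A) && (k \in lines_through L v)].

Lemma card_split (A : {set 'I_12}) v : mult L v = (#|inA A v| + #|inA (~:A) v|)%N.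
Proof.
rewrite /mult -(cardsID A (lines_through L v)); congr (_ + _)%N; apply: eq_card => k;
  by rewrite !inE andbC.
Qed.

Definition Mx (A : {set 'I_12}) := forall h k, h \in A -> k \in ~: A ->
  #|inA A (P h k)| = 2%N /\ #|inA (~:A) (P h k)| = 2%N.

Lemma MxC (A : {set 'I_12}) : Mx A -> Mx (~: A).
Proof.
move=> M h k hA kA; rewrite setCK in kA *.
have hk : k != h by apply: contraTneq hA => <-; rewrite inE kA.
by rewrite PC 1?eq_sym //; case: (M k h kA hA) => -> ->.
Qed.

Definition G (A : {set 'I_12}) h := [set g | ((g \in A) && (g != h)) && (#|inA (~:A) (P h g)| != 0%N)].

Lemma count (A : {set 'I_12}) h : Mx A -> h \in A -> #|~: A| = (2 * #|G A h|)%N.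
Proof.
move=> M hA.
have S1 k : k \in ~: A ->
  #|[set g | ((g \in A) && (g != h)) && (incident (L k) (P h g))]| = 1%N.
  move=> kA; have hk : h != k by apply: contraTneq kA => <-; rewrite inE hA.
  have [c2 _] := M h k hA kA.
  have hin : h \in inA A (P h k) by rewrite !inE hA; case: (PP hk).
  move: c2; rewrite (cardsD1 h) hin add1n => -[] e; apply: etrans e.
  apply: eq_card => g; rewrite !inE.
  case: (eqVneq g h) => [->|gh] /=; first by rewrite andbF.
  by rewrite swapT ?andbT // eq_sym.
have -> : #|~: A| = (\sum_(k in ~: A) 1)%N by rewrite sum1_card.
rewrite (eq_bigr _ (fun k kA => esym (S1 k kA))).
under eq_bigr do rewrite card_cond.
rewrite exchange_big /=.
rewrite (eq_bigr (fun g => (#|inA (~:A) (P h g)| != 0%N) * 2)%N); last first.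
  move=> g /andP[gA gh].
  rewrite (_ : (\sum_(i in ~: A) incident (L i) (P h g))%N = #|inA (~:A) (P h g)|); last first.
    by rewrite /inA card_cond; apply: eq_bigr => i _; rewrite inE.
  case: (eqVneq #|inA (~: A) (P h g)| 0%N) => [-> //|ne].
  have [k] : exists k, k \in inA (~:A) (P h g) by apply/card_gt0P; rewrite lt0n.
  rewrite /= mul1n inE => /andP[kA kg]; rewrite inE in kg.
  have hg : h != g by rewrite eq_sym.
  have hk : h != k by apply: contraTneq kA => <-; rewrite inE hA.
  case: (PP hg) => a b _.
  rewrite (Puniq hk a b kg).
  by case: (M h k hA kA) => _ ->.
by rewrite -big_distrl /= mulnC /G card_cond.
Qed.

Lemma GP (A : {set 'I_12}) h g : h \in A -> g \in G A h ->
  [/\ g \in A, h != g & exists k, [/\ k \in ~:A, h != k & P h g = P h k]].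
Proof.
move=> hA; rewrite inE => /andP[/andP[gA gh] ne].
have [k] : exists k, k \in inA (~:A) (P h g) by apply/card_gt0P; rewrite lt0n.
rewrite inE => /andP[kA kg]; rewrite inE in kg.
have hg : h != g by rewrite eq_sym.
have hk : h != k by apply: contraTneq kA => <-; rewrite inE hA.
case: (PP hg) => a b _.
by split => //; exists k; split => //; apply: Puniq.
Qed.

Lemma core (A : {set 'I_12}) h : Mx A -> #|A| = 6%N -> #|~: A| = 6%N -> h \in A ->
  exists s : seq 'rV[algC]_3,
    [/\ uniq s, all normalized s, size s = 3%N &
        forall v, normalized v ->
          (v \in s <-> incident (L h) v && (mult L v == 4)%N)].
Proof.
move=> M cA cAc hA.
have cG : #|G A h| = 3%N by move: (count M hA); rewrite cAc; lia.
exists (map (P h) (enum (G A h))); split.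
- rewrite map_inj_in_uniq ?enum_uniq // => g1 g2; rewrite !mem_enum => g1G g2G e.
  apply/eqP; apply/negP => /negP n12.
  have [g1A hg1 [k [kA hk e1]]] := GP hA g1G.
  have [g2A hg2 _] := GP hA g2G.
  have [c2 _] := M h k hA kA.
  have hin : h \in inA A (P h k) by rewrite !inE hA; case: (PP hk).
  move: c2; rewrite (cardsD1 h) hin add1n => -[] c1.
  have : (#|[set g1; g2]| <= #|inA A (P h k) :\ h|)%N.
    apply: subset_leq_card; apply/subsetP => g; rewrite !inE => /orP[] /eqP ->.
    + by rewrite eq_sym hg1 g1A -e1 /=; case: (PP hg1).
    + by rewrite eq_sym hg2 g2A -e1 e /=; case: (PP hg2).
  by rewrite cards2 n12 c1.
- apply/allP => v /mapP [g]; rewrite mem_enum => gG ->.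
  by have [_ hg _] := GP hA gG; case: (PP hg).
- by rewrite size_map -cardE.
move=> v nv; split.
- move=> /mapP [g]; rewrite mem_enum => gG ->.
  have [gA hg [k [kA hk e]]] := GP hA gG.
  case: (PP hg) => _ -> _ /=.
  by rewrite (card_split A) e; case: (M h k hA kA) => -> ->.
move=> /andP[hv /eqP m4].
case: (eqVneq #|inA (~:A) v| 0%N) => [z|nz].
- exfalso.
  have c4 : #|inA A v| = 4%N by move: m4; rewrite (card_split A) z addn0.
  have hin : h \in inA A v by rewrite !inE hA.
  move: c4; rewrite (cardsD1 h) hin add1n => -[] c3.
  have sub : (inA A v :\ h) :|: G A h \subset A :\ h.
    apply/subsetP => g; rewrite !inE; case/orP => [/and3P[gh gA _]|/andP[/andP[gA gh] _]];
      by rewrite gA gh.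
  have dis : (inA A v :\ h) :&: G A h = set0.
    apply/eqP; rewrite -subset0; apply/subsetP => g; rewrite !inE.
    case/andP => /and3P[gh gA gv] /andP[_ ne].
    have hg : h != g by rewrite eq_sym.
    by move: ne; rewrite -(Puniq hg nv hv gv) z.
  move: (subset_leq_card sub); rewrite cardsU dis cards0 subn0 c3 cG.
  by move: cA; rewrite (cardsD1 h A) hA; lia.
- have [k] : exists k, k \in inA (~:A) v by apply/card_gt0P; rewrite lt0n.
  rewrite inE => /andP[kA kv]; rewrite inE in kv.
  have hk : h != k by apply: contraTneq kA => <-; rewrite inE hA.
  have e := Puniq hk nv hv kv.
  have [c2 _] := M h k hA kA.
  have hin : h \in inA A v by rewrite !inE hA.
  move: c2; rewrite -e (cardsD1 h) hin add1n => -[] c1.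
  have [g] : exists g, g \in inA A v :\ h by apply/card_gt0P; rewrite c1.
  rewrite !inE => /and3P[gh gA gv].
  have hg : h != g by rewrite eq_sym.
  have eg := Puniq hg nv hv gv.
  apply/mapP; exists g => //; rewrite mem_enum inE gA gh /= -eg.
  exact: nz.
Qed.

Lemma G_card (A : {set 'I_12}) h : h \in A -> (#|G A h| < #|A|)%N.
Proof.
move=> hA; rewrite (cardsD1 h A) hA add1n ltnS; apply: subset_leq_card.
by apply/subsetP => g; rewrite !inE => /andP[/andP[-> ->] _].
Qed.
End Geo.

Lemma F2_1 (x : 'F_2) : x != 0 -> x = 1.
Proof. by case: x => -[|[|n]] Hx // _; apply: val_inj. Qed.

Unset Implicit Arguments.
Theorem lemma3p5 (L : 'I_12 -> 'rV[algC]_3) :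
  line_arrangement L ->
  (forall v, intersection_point L v -> (mult L v <= 5)%N) ->
  (exists eta : 'I_12 -> 'F_2, solves_S L eta /\ nonconstant eta) ->
  forall i : 'I_12, exists s : seq 'rV[algC]_3,
    [/\ uniq s, all normalized s, size s = 3%N &
        forall v, normalized v ->
          (v \in s <-> incident (L i) v && (mult L v == 4)%N)].
Proof.
move=> hL hm [eta [hs [h0 [k0 hne]]]] i.
pose A := [set j | eta j == 0].
have M : Mx hL A.
  move=> h k hA kA.
  have hk : h != k by apply: contraTneq kA => <-; rewrite inE hA.
  case: (PP hL hk) => nv hv kv.
  set v := P hL h k in nv hv kv *.
  have ip : intersection_point L v.
    rewrite /intersection_point normalized_neq0 //= /mult.
    apply: (@leq_trans #|[set h; k]|); first by rewrite cards2 hk.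
    by apply: subset_leq_card; apply/subsetP => j; rewrite !inE => /orP[] /eqP ->.
  have m5 := hm v ip.
  have ea : eta h = 0 by move: hA; rewrite inE => /eqP.
  have eb : eta k != 0 by move: kA; rewrite !inE.
  have ha : (0 < #|inA L A v|)%N by apply/card_gt0P; exists h; rewrite inE hA /= inE.
  have hb : (0 < #|inA L (~:A) v|)%N by apply/card_gt0P; exists k; rewrite inE kA /= inE.
  move: (hs v ip); case: ifP => d; last first.
    by move=> /(_ h k); rewrite !inE hv kv ea => /(_ isT isT) e; move: eb; rewrite -e eqxx.
  have -> : (\sum_(j in lines_through L v) eta j) = (#|inA L (~:A) v|)%:R.
    rewrite (eq_bigr (fun j => ((j \in ~: A) : nat)%:R)); last first.
      move=> j _; rewrite !inE; case: (eqVneq (eta j) 0) => [->//|/F2_1 ->//].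
    rewrite -natr_sum card_cond /=; congr (_ %:R); rewrite -!card_cond.
    by apply: eq_card => j; rewrite !inE andbC.
  rewrite -(Fp_nat_mod (isT : prime 2)) modn2 => ho.
  have eo : ~~ odd #|inA L (~: A) v|.
    by apply/negP => o; move: ho; rewrite o; apply/eqP; rewrite oner_eq0.
  move: d m5; rewrite (card_split L A v) -dvdn2 in eo * => d m5.
  case/dvdnP: eo => x ex; case/dvdnP: d => y ey.
  set p1 := #|inA L A v| in ha m5 ex ey *; set p2 := #|inA L (~: A) v| in hb m5 ex ey *.
  split; lia.
have [a [b [aA bA]]] : exists a b, a \in A /\ b \in ~: A.
  case: (eqVneq (eta h0) 0) => [e|e].
    exists h0, k0; split; rewrite !inE ?e //.
    by apply/eqP => ek; apply: hne; rewrite e ek.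
  exists k0, h0; split; rewrite !inE //.
  case: (eqVneq (eta k0) 0) => // /F2_1 ek; exfalso; apply: hne; by rewrite (F2_1 e) ek.
have c1 := count M aA.
have M' := MxC M.
have c2 := count M' bA; rewrite setCK in c2.
have g1 := G_card hL aA.
have g2 := G_card hL bA.
have tot := cardsC A; rewrite card_ord in tot.
have [cA cAc] : #|A| = 6%N /\ #|~: A| = 6%N.
  move: c1 c2 g1 g2 tot.
  move: #|A| #|~: A| #|G hL A a| #|G hL (~: A) b| => x y z w.
  move=> *; split; lia.
case: (boolP (i \in A)) => iA; first exact: core M cA cAc iA.
have cAc' : #|~: ~: A| = 6%N by rewrite setCK.
have iA' : i \in ~: A by rewrite inE.
exact: core M' cAc cAc' iA'.
Qed.
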